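(* Let $n\ge2$ and $0\le m\le\lfloor n/2\rfloor$. For $z^n\in\mathcal Z^n$ let $\hat{\mathbf S}(z^n)=(\hat s_1,\dots,\hat s_n)$ be any minimizer of $\tilde L_{\mathbf S}(z^n)$ over $\mathbf S\in\mathcal S^n_{0,m}$, and let the $(0,m)$-S-DUDE be the denoiser with output $\hat X_t(z^n)=\hat s_t(z_t)$, $1\le t\le n$. Then for all $\epsilon>0$ and all $x^n\in\mathcal X^n$, $$\Pr\Big(L_{\hat{\mathbf S}(Z^n)}(x^n,Z^n)-D_{0,m}(x^n,Z^n)>\epsilon\Big)\le 2\exp\left(-n\Big[\frac{\epsilon^2}{2L_{\max}^2}-2\Big\{h\Big(\frac mn\Big)+\frac{(m+1)\ln N}{n}\Big\}\Big]\right),$$ where $h(x)=-x\ln x-(1-x)\ln(1-x)$ and $N=|\mathcal S|$. In particular the right-hand side is exponentially small in $n$ provided $m=o(n)$.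
   Context: Let $\mathcal X,\mathcal Z,\hat{\mathcal X}$ be finite alphabets and $\Pi=\{\Pi(x,z)\}$ a $|\mathcal X|\times|\mathcal Z|$ stochastic matrix (discrete memoryless channel) of full row rank. For deterministic $x^n\in\mathcal X^n$, the channel output $Z^n$ has independent components with $\Pr(Z_t=z)=\Pi(x_t,z)$. Fix a loss $\Lambda:\mathcal X\times\hat{\mathcal X}\to[0,\infty)$, $\Lambda_{\max}=\max_{x,\hat x}\Lambda(x,\hat x)$. Let $\mathcal S$ be the set of all maps $s:\mathcal Z\to\hat{\mathcal X}$. Fix a real $|\mathcal Z|\times|\mathcal X|$ matrix $H$ with $\Pi H=I$; $h(z)\in\mathbb R^{\mathcal X}$ is the column vector equal to the $z$-th row of $H$. For $s\in\mathcal S$, $\rho(s)\in\mathbb R^{\mathcal X}$ has components $\rho_x(s)=\sum_z\Lambda(x,s(z))\Pi(x,z)$, and $\ell(z,s)=h(z)^T\rho(s)$. Let $\ell_{\max}=\max_{z,s}\ell(z,s)-\min_{z,s}\ell(z,s)$, $L_{\max}=\Lambda_{\max}+\ell_{\max}$. For $\mathbf S=(s_1,\dots,s_n)\in\mathcal S^n$: $L_{\mathbf S}(x^n,z^n)=\frac1n\sum_{t=1}^n\Lambda(x_t,s_t(z_t))$ and $\tilde L_{\mathbf S}(z^n)=\frac1n\sum_{t=1}^n\ell(z_t,s_t)$. Let $\mathcal S^n_{0,m}=\{\mathbf S\in\mathcal S^n:\sum_{t=2}^n\mathbf 1_{\{s_{t-1}\ne s_t\}}\le m\}$ and $D_{0,m}(x^n,z^n)=\min_{\mathbf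 S\in\mathcal S^n_{0,m}}L_{\mathbf S}(x^n,z^n)$. *)

(* Defs.v *)
From HB Require Import structures.
From mathcomp Require Import all_boot all_order all_algebra.
From mathcomp Require Import all_classical all_reals sequences exp.
Set Implicit Arguments. Unset Strict Implicit. Unset Printing Implicit Defensive.
Import Order.TTheory GRing.Theory Num.Theory.
Local Open Scope ring_scope.

Section SDUDE.
Variables (R : realType) (X Z Xh : finType).
Variables (Pi : X -> Z -> R) (H : Z -> X -> R) (Lam : X -> Xh -> R).

Definition Sym := {ffun Z -> Xh}.

Definition Pi_mx : 'M[R]_(#|X|, #|Z|) :=
  \matrix_(i, j) Pi (enum_val i) (enum_val j).

Definition stochastic : Prop :=
  (forall x z, 0 <= Pi x z) /\ (forall x, \sum_z Pi x z = 1).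

Definition PiH_identity : Prop :=
  forall x x', \sum_z Pi x z * H z x' = (x == x')%:R.

Definition Lam_max : R := \big[Num.max/0]_(p : X * Xh) Lam p.1 p.2.

Definition rho (s : Sym) (x : X) : R := \sum_z Lam x (s z) * Pi x z.

Definition ell (z : Z) (s : Sym) : R := \sum_x H z x * rho s x.

Definition ell_max : R :=
  \big[Num.max/0]_(p : (Z * Sym) * (Z * Sym)) (ell p.1.1 p.1.2 - ell p.2.1 p.2.2).

Definition L_max : R := Lam_max + ell_max.

Variable n : nat.

Definition switches (S : {ffun 'I_n -> Sym}) : nat :=
  #|[set p : 'I_n * 'I_n | (val p.2 == (val p.1).+1) && (S p.1 != S p.2)]|.

Definition Lloss (S : {ffun 'I_n -> Sym}) (x : {ffun 'I_n -> X})
  (z : {ffun 'I_n -> Z}) : R :=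
  n%:R^-1 * \sum_(t < n) Lam (x t) (S t (z t)).

Definition Ltilde (S : {ffun 'I_n -> Sym}) (z : {ffun 'I_n -> Z}) : R :=
  n%:R^-1 * \sum_(t < n) ell (z t) (S t).

(* D_{0,m}(x^n,z^n) = min over S in S^n_{0,m} of L_S(x^n,z^n)
   (the set is nonempty whenever Sym is; default 0 otherwise) *)
Definition D0m (m : nat) (x : {ffun 'I_n -> X}) (z : {ffun 'I_n -> Z}) : R :=
  match [pick S : {ffun 'I_n -> Sym} | switches S <= m]%N with
  | Some S0 => \big[Num.min/Lloss S0 x z]_(S : {ffun 'I_n -> Sym} | (switches S <= m)%N)
                 Lloss S x z
  | None => 0
  end.

(* Pr(Z^n in E) for the memoryless channel with deterministic input x^n *)
Definition Prob (x : {ffun 'I_n -> X}) (E : pred {ffun 'I_n -> Z}) : R :=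
  \sum_(z : {ffun 'I_n -> Z} | E z) \prod_(t < n) Pi (x t) (z t).

End SDUDE.

Definition hb {R : realType} (p : R) : R :=
  - p * ln p - (1 - p) * ln (1 - p).

(* Main.v *)
Require Import Defs.
From HB Require Import structures.
From mathcomp Require Import all_boot all_order all_algebra.
From mathcomp Require Import all_classical all_reals sequences exp.
From mathcomp Require Import all_analysis.
From mathcomp Require Import convex interval_inference unstable.
From mathcomp Require Import ring lra zify.
Import Order.TTheory GRing.Theory Num.Theory.
Local Open Scope ring_scope.

Lemma chord (R : realType) (c y lam : R) : 0 < c -> -c <= y -> y <= c ->
  expR (lam * y) <= ((c - y) * expR (- (lam * c)) + (c + y) * expR (lam * c)) / (2 * c).
Proof.
move=> c0 hy1 hy2.
have t0 : 0 <= (c + y) / (2 * c) by rewrite divr_ge0 //; lra.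
have t1 : (c + y) / (2 * c) <= 1 by rewrite ler_pdivrMr; lra.
have := @convex_expR R (Itv01 t0 t1) (lam * c) (- (lam * c)).
rewrite !convRE /onem /=.
have -> : (c + y) / (2 * c) * (lam * c) + (1 - (c + y) / (2 * c)) * - (lam * c) = lam * y.
  by field; lra.
move=> h; apply: (le_trans h) => {h}.
rewrite le_eqVlt; apply/orP; left; apply/eqP; field; lra.
Qed.

Lemma fact_double (j : nat) : (2 ^ j * j`! <= (j.*2)`!)%N.
Proof.
elim: j => [|j IH] //=.
rewrite doubleS !factS expnS.
have h1 : (2 * 2 ^ j * (j.+1 * j`!) = (2 * j.+1) * (2 ^ j * j`!))%N by ring.
rewrite h1 [X in (_ <= X)%N]mulnA.
apply: leq_mul => //.
rewrite mulnC; apply: leq_trans (leq_pmulr _ _) => //; lia.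
Qed.

Lemma sum_nonneg_mono (R : realType) (F : nat -> R) m k :
  (forall i, 0 <= F i) -> (m <= k)%N ->
  \sum_(0 <= i < m) F i <= \sum_(0 <= i < k) F i.
Proof.
move=> F0 mk; rewrite (big_cat_nat (leq0n m) mk) /= lerDl.
by apply: sumr_ge0 => i _.
Qed.

Lemma cosh_le (R : realType) (u : R) :
  (expR u + expR (- u)) / 2 <= expR (u ^+ 2 / 2).
Proof.
set a := fun k => exp_coeff u k + exp_coeff (- u) k.
set b := exp_coeff (u ^+ 2 / 2).
have b0 : forall j, 0 <= b j.
  by move=> j; rewrite /b /exp_coeff /= divr_ge0 // exprn_ge0 // divr_ge0 // sqr_ge0.
have aE : forall M, \sum_(0 <= k < M.*2) a k =
    \sum_(0 <= j < M) 2 * (u ^+ (j.*2) / (j.*2)`!%:R).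
  elim=> [|M IH]; first by rewrite !big_geq.
  rewrite doubleS !big_nat_recr //= IH -addrA; congr (_ + _).
  rewrite /a /exp_coeff /=.
  have e1 : (- u) ^+ M.*2 = u ^+ M.*2 by rewrite -mul2n !exprM sqrrN.
  have e2 : (- u) ^+ M.*2.+1 = - u ^+ M.*2.+1 by rewrite exprS e1 exprS mulNr.
  by rewrite e1 e2 mulNr subrr addr0 mulr_natl mulr2n.
have ab : forall j, 2 * (u ^+ (j.*2) / (j.*2)`!%:R) <= 2 * b j.
  move=> j; rewrite ler_pM2l // /b /exp_coeff /=.
  have -> : (u ^+ 2 / 2) ^+ j / j`!%:R = u ^+ j.*2 / (2 ^ j * j`!)%:R.
    rewrite natrM natrX expr_div_n -exprM mul2n; field.
    apply/andP; split; first by rewrite pnatr_eq0 -lt0n fact_gt0.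
    by rewrite expf_neq0 // pnatr_eq0.
  apply: ler_wpM2l; first by rewrite -mul2n exprM exprn_ge0 // sqr_ge0.
  rewrite lef_pV2 ?posrE ?ltr0n ?fact_gt0 ?muln_gt0 ?expn_gt0 ?fact_gt0 //.
  by rewrite ler_nat fact_double.
have key : forall N, \sum_(0 <= k < N) a k <= 2 * \sum_(0 <= j < N) b j.
  move=> N; rewrite -(odd_double_half N).
  set M := N./2.
  case: (odd N) => /=.
  - rewrite add1n big_nat_recr //= aE.
    apply: (@le_trans _ _ (2 * \sum_(0 <= j < M.+1) b j)); last first.
      rewrite ler_pM2l //; apply: sum_nonneg_mono => //; lia.
    rewrite big_nat_recr //= mulrDr; apply: lerD.
      by rewrite mulr_sumr; apply: ler_sum => j _; apply: ab.
    have := ab M; rewrite /a /exp_coeff /=.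
    have e1 : (- u) ^+ M.*2 = u ^+ M.*2 by rewrite -mul2n !exprM sqrrN.
    by rewrite e1 mulr_natl mulr2n.
  - rewrite add0n aE.
    apply: (@le_trans _ _ (2 * \sum_(0 <= j < M) b j)); last first.
      rewrite ler_pM2l //; apply: sum_nonneg_mono => //; lia.
    by rewrite mulr_sumr; apply: ler_sum => j _; apply: ab.
have cu := is_cvg_series_exp_coeff u.
have cv := is_cvg_series_exp_coeff (- u).
have cw := is_cvg_series_exp_coeff (u ^+ 2 / 2).
rewrite ler_pdivrMr // mulrC.
rewrite /expR -limD //.
rewrite -[X in _ <= X]limZl_tmp //.
apply: ler_lim; [exact: is_cvgD | exact: is_cvgZl_tmp |].
apply: nearW => N /=.
rewrite /GRing.add /GRing.scale /= /series /= -big_split /=.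
exact: key.
Qed.

Lemma prod_prob (R : realType) (I W : finType) (q : I -> W -> R) :
  (forall i, \sum_w q i w = 1) ->
  \sum_(z : {ffun I -> W}) \prod_i q i (z i) = 1.
Proof.
move=> q1; rewrite -bigA_distr_bigA /=.
by rewrite big1 // => i _; rewrite q1.
Qed.

Lemma binom_bound (R : realType) (n m : nat) : (0 < n)%N -> (m.*2 <= n)%N ->
  (#|[set f : {ffun 'I_n -> bool} | (#|[set t | f t]| <= m)%N]|%:R : R)
    <= expR (n%:R * hb (m%:R / n%:R)).
Proof.
move=> n0 mn.
set p : R := m%:R / n%:R.
have nR0 : 0 < n%:R :> R by rewrite ltr0n.
have np : n%:R * p = m%:R by rewrite /p mulrC divfK // gt_eqF.
have mnR : m%:R * 2 <= n%:R :> R by rewrite -natrM ler_nat muln2.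
have hp0 : 0 <= p by rewrite /p divr_ge0.
have hp : p <= 1 - p.
  rewrite -(ler_pM2l nR0) mulrBr np mulr1; lra.
set wt := fun f : {ffun 'I_n -> bool} => \prod_t (if f t then p else 1 - p).
have sum1 : \sum_f wt f = 1.
  apply: (@prod_prob R _ _ (fun _ b => if b then p else 1 - p)) => t.
  by rewrite big_bool /=; ring.
have wtE : forall f, wt f = p ^+ #|[set t | f t]| * (1 - p) ^+ (n - #|[set t | f t]|).
  move=> f; rewrite /wt (bigID (fun t => f t)) /=.
  rewrite (eq_bigr (fun _ => p)); last by move=> t ->.
  rewrite [X in _ * X](eq_bigr (fun _ => 1 - p)); last by move=> t /negbTE ->.
  rewrite !prodr_const; congr (_ ^+ _ * _ ^+ _).
    by rewrite cardsE.
  have h := cardC [pred t | f t]; rewrite card_ord in h.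
  have e : #|(fun i => ~~ f i)| = #|[predC [pred t | f t]]| by apply: eq_card.
  have e2 : #|[set t | f t]| = #|[pred t | f t]| by rewrite cardsE.
  by rewrite e e2 -[X in (X - _)%N]h addKn.
set c := p ^+ m * (1 - p) ^+ (n - m).
have lb : forall f : {ffun 'I_n -> bool}, (#|[set t | f t]| <= m)%N -> c <= wt f.
  move=> f; rewrite wtE; set k := #|[set t | f t]| => km.
  have kn : (m <= n)%N by lia.
  rewrite /c (_ : m = k + (m - k))%N; last by lia.
  rewrite (_ : (n - k) = (m - k) + (n - m))%N; last by lia.
  rewrite (_ : (n - (k + (m - k))) = n - m)%N; last by lia.
  rewrite !exprD -!mulrA; apply: ler_wpM2l; first exact: exprn_ge0.
  apply: ler_wpM2r; first by apply: exprn_ge0; lra.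
  by apply: lerXn2r => //; rewrite nnegrE; lra.
have cE : c = expR (- (n%:R * hb p)).
  case: (posnP m) => [m0|mpos].
    rewrite /c /p m0 mul0r expr0 mul1r subr0 expr1n /hb.
    by rewrite subr0 ln1 oppr0 !mul0r mulr0 subr0 mulr0 oppr0 expR0.
  have pp : 0 < p by rewrite /p divr_gt0 // ltr0n.
  have qp : 0 < 1 - p by lra.
  rewrite /c -{1}(lnK pp) -{1}(lnK qp) -!expRM_natl -expRD /hb.
  congr (expR _).
  rewrite natrB; last by lia.
  have -> : n%:R * (- p * ln p - (1 - p) * ln (1 - p)) =
     - (n%:R * p) * ln p - (n%:R - n%:R * p) * ln (1 - p) by ring.
  by rewrite np; ring.
have c0 : 0 < c by rewrite cE expR_gt0.
set B1 := [set f : {ffun 'I_n -> bool} | (#|[set t | f t]| <= m)%N].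
have : #|B1|%:R * c <= 1.
  rewrite mulr_natl -sumr_const -[X in _ <= X]sum1.
  apply: (@le_trans _ _ (\sum_(f in B1) wt f)).
    by apply: ler_sum => f; rewrite inE; apply: lb.
  rewrite [X in _ <= X](bigID (fun f => f \in B1)) /= lerDl.
  by apply: sumr_ge0 => f _; apply: prodr_ge0 => t _; case: (f t) => //; lra.
by rewrite -ler_pdivlMr // cE expRN invrK mul1r.
Qed.

Lemma hoeff1 (R : realType) (W : finType) (q Y : W -> R) (c lam : R) :
  0 < c -> (forall w, 0 <= q w) -> \sum_w q w = 1 -> \sum_w q w * Y w = 0 ->
  (forall w, -c <= Y w <= c) ->
  \sum_w q w * expR (lam * Y w) <= expR ((lam * c) ^+ 2 / 2).
Proof.
move=> c0 q0 q1 qY hY.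
set A := expR (- (lam * c)); set B := expR (lam * c).
apply: (@le_trans _ _ (\sum_w q w * (((c - Y w) * A + (c + Y w) * B) / (2 * c)))).
  apply: ler_sum => w _; apply: ler_wpM2l => //.
  by case/andP: (hY w) => h1 h2; apply: chord.
have E : forall w, q w * (((c - Y w) * A + (c + Y w) * B) / (2 * c)) =
   q w * ((B + A) / 2) + q w * Y w * ((B - A) / (2 * c)).
  by move=> w; field; lra.
rewrite (eq_bigr _ (fun w _ => E w)) big_split /= -!mulr_suml q1 qY mul0r addr0 mul1r.
by rewrite /A /B; apply: cosh_le.
Qed.

Lemma chernoff_prod (R : realType) (I W : finType) (q Y : I -> W -> R) (c lam a : R) :
  0 < c -> 0 <= lam -> (forall i w, 0 <= q i w) -> (forall i, \sum_w q i w = 1) ->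
  (forall i, \sum_w q i w * Y i w = 0) -> (forall i w, -c <= Y i w <= c) ->
  \sum_(z : {ffun I -> W} | a < \sum_i Y i (z i)) \prod_i q i (z i)
   <= expR (- (lam * a) + #|I|%:R * ((lam * c) ^+ 2 / 2)).
Proof.
move=> c0 l0 q0 q1 qY hY.
apply: (@le_trans _ _ (\sum_(z : {ffun I -> W}) \prod_i q i (z i) * expR (lam * (\sum_i Y i (z i) - a)))).
  rewrite big_mkcond /=; apply: ler_sum => z _.
  have p0 : 0 <= \prod_i q i (z i) by apply: prodr_ge0 => i _.
  case: ifP => h.
    rewrite -[X in X <= _]mulr1; apply: ler_wpM2l => //.
    by rewrite -expR0 ler_expR mulr_ge0 // subr_ge0 ltW.
  by rewrite mulr_ge0 // expR_ge0.
have E : forall z : {ffun I -> W}, \prod_i q i (z i) * expR (lam * (\sum_i Y i (z i) - a))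
    = expR (- (lam * a)) * \prod_i (q i (z i) * expR (lam * Y i (z i))).
  move=> z; rewrite big_split /= mulrCA; congr (_ * _).
  by rewrite mulrBr addrC expRD mulr_sumr expR_sum.
rewrite (eq_bigr _ (fun z _ => E z)) -mulr_sumr -(bigA_distr_bigA (fun i w => q i w * expR (lam * Y i w))) /= expRD.
apply: ler_wpM2l; first exact: expR_ge0.
rewrite expRM_natl -prodr_const.
apply: ler_prod => i _; apply/andP; split.
  by apply: sumr_ge0 => w _; rewrite mulr_ge0 // expR_ge0.
exact: hoeff1.
Qed.

Section Count.
Variables (T : finType) (n : nat).

Definition mysw (S : {ffun 'I_n -> T}) : nat :=
  #|[set p : 'I_n * 'I_n | (val p.2 == (val p.1).+1) && (S p.1 != S p.2)]|.

Definition swJ (S : {ffun 'I_n -> T}) : {ffun 'I_n -> bool} :=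
  [ffun t => [exists t' : 'I_n, (val t == (val t').+1) && (S t' != S t)]].

Lemma card_swJ S : #|[set t | swJ S t]| = mysw S.
Proof.
rewrite /mysw -(@card_in_imset _ _ (fun p : 'I_n * 'I_n => p.2)).
  apply: eq_card => t; rewrite !inE ffunE.
  apply/existsP/imsetP.
    by case=> t' h; exists (t', t); rewrite // inE /=.
  by case=> -[t1 t2]; rewrite inE /= => h ->; exists t1.
move=> [a1 a2] [b1 b2]; rewrite !inE /= => /andP[/eqP h1 _] /andP[/eqP h2 _] e.
subst b2; congr (_, _); apply: val_inj; move: h1 h2 => /= -> [] //.
Qed.

Definition rk (f : {ffun 'I_n -> bool}) (t : 'I_n) : nat :=
  #|[set j : 'I_n | f j && (j <= t)%N]|.

Lemma rk_mono f (t t' : 'I_n) : (t <= t')%N -> (rk f t <= rk f t')%N.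
Proof.
move=> tt; apply: subset_leq_card; apply/fintype.subsetP => j; rewrite !inE.
by case/andP=> -> /= h; apply: leq_trans h tt.
Qed.

Lemma rk_le f t : (rk f t <= #|[set j | f j]|)%N.
Proof. by apply: subset_leq_card; apply/fintype.subsetP => j; rewrite !inE => /andP[]. Qed.

Lemma rank_const S : forall d (t t' : 'I_n), (t' : nat) = (t + d)%N ->
  rk (swJ S) t = rk (swJ S) t' -> S t = S t'.
Proof.
elim=> [|d IH] t t' e hr.
  by congr (S _); apply: val_inj; rewrite /= e addn0.
have lt : (t + d < n)%N by move: (ltn_ord t'); rewrite e; lia.
pose t'' : 'I_n := Ordinal lt.
have r1 : (rk (swJ S) t <= rk (swJ S) t'')%N by apply: rk_mono => /=; lia.
have r2 : (rk (swJ S) t'' <= rk (swJ S) t')%N by apply: rk_mono => /=; lia.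
have e1 : rk (swJ S) t = rk (swJ S) t'' by lia.
have e2 : rk (swJ S) t'' = rk (swJ S) t' by lia.
rewrite (IH t t'' erefl e1).
apply/eqP; apply/negPn/negP => hne.
have : (rk (swJ S) t'' < rk (swJ S) t')%N; last by rewrite e2 ltnn.
apply: proper_card; apply/fintype.properP; split.
  apply/fintype.subsetP => j; rewrite !inE; case/andP=> -> /= h; apply: leq_trans h _ => /=; lia.
exists t'; rewrite !inE ?leqnn ?andbT ffunE.
  by apply/existsP; exists t''; rewrite hne andbT /= e addnS.
apply/negP => /andP[_]; rewrite /= e; lia.
Qed.

Lemma rank_const2 S (t t' : 'I_n) : rk (swJ S) t = rk (swJ S) t' -> S t = S t'.
Proof.
case: (leqP t t') => h.
  by apply: (@rank_const S (t' - t)%N); lia.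
move=> e; apply/esym; apply: (@rank_const S (t - t')%N) => //; lia.
Qed.

Variables (m : nat) (t0 : 'I_n).

Definition enc (S : {ffun 'I_n -> T}) : {ffun 'I_n -> bool} * {ffun 'I_m.+1 -> T} :=
  (swJ S, [ffun i : 'I_m.+1 => S (odflt t0 [pick t | rk (swJ S) t == i])]).

Lemma count_A :
  (#|[set S : {ffun 'I_n -> T} | (mysw S <= m)%N]| <=
   #|[set f : {ffun 'I_n -> bool} | (#|[set t | f t]| <= m)%N]| * #|T| ^ m.+1)%N.
Proof.
rewrite -(@card_in_imset _ _ enc).
  have -> : (#|T| ^ m.+1 = #|[set: {ffun 'I_m.+1 -> T}]|)%N by rewrite cardsT card_ffun card_ord.
  rewrite -cardsX; apply: subset_leq_card; apply/fintype.subsetP => p /imsetP[S].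
  by rewrite !inE => hS ->; rewrite /= card_swJ hS.
move=> S1 S2; rewrite !inE => h1 h2 [ej ev].
apply/ffunP => t.
have rt : (rk (swJ S1) t < m.+1)%N by rewrite ltnS (leq_trans (rk_le _ _)) // card_swJ.
have := congr1 (fun g : {ffun 'I_m.+1 -> T} => g (Ordinal rt)) ev; rewrite !ffunE -ej.
case: pickP => [t1 /eqP /= ht1 | /(_ t)]; last by rewrite eqxx.
have a1 : S1 t1 = S1 t by apply: rank_const2.
have a2 : S2 t1 = S2 t by apply: rank_const2; rewrite -ej.
by rewrite /= a1 a2.
Qed.

End Count.

Lemma bigmax_ge (R : realType) (T : finType) (F : T -> R) j :
  F j <= \big[Num.max/0]_i F i.
Proof.
have : forall r : seq T, j \in r -> F j <= \big[Num.max/0]_(i <- r) F i.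
  elim=> // a r IH; rewrite inE big_cons /= => /orP[/eqP ->|h].
    by rewrite le_max lexx.
  by rewrite le_max (IH h) orbT.
by apply; exact: mem_index_enum.
Qed.

Lemma bigmax_ge0 (R : realType) (T : finType) (F : T -> R) :
  0 <= \big[Num.max/0]_i F i.
Proof.
elim: (index_enum T) => [|a r IH]; first by rewrite big_nil.
by rewrite big_cons /= le_max IH orbT.
Qed.

Lemma bigmin_att (R : realType) (T : finType) (P : pred T) (F : T -> R) x0 :
  (exists2 s, P s & x0 = F s) ->
  exists2 s, P s & \big[Num.min/x0]_(i | P i) F i = F s.
Proof.
move=> h; apply: (big_ind (fun v => exists2 s, P s & v = F s)) => //.
  move=> u v [su Pu ->] [sv Pv ->]; case: (lerP (F su) (F sv)) => h1.
    by exists su => //; rewrite min_l.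
  by exists sv => //; rewrite min_r // ltW.
by move=> i Pi; exists i.
Qed.

Theorem theorem2 (R : realType) (X Z Xh : finType)
  (Pi : X -> Z -> R) (H : Z -> X -> R) (Lam : X -> Xh -> R)
  (hPi : stochastic Pi)
  (hrank : \rank (Pi_mx Pi) = #|X|)
  (hH : PiH_identity Pi H)
  (hLam : forall x xh, 0 <= Lam x xh)
  (n m : nat) (hn : (2 <= n)%N) (hm : (m <= n./2)%N)
  (Shat : {ffun 'I_n -> Z} -> {ffun 'I_n -> Sym Z Xh})
  (hShat : forall z, (switches (Shat z) <= m)%N /\
     forall S : {ffun 'I_n -> Sym Z Xh}, (switches S <= m)%N ->
       Ltilde Pi H Lam (Shat z) z <= Ltilde Pi H Lam S z)
  (eps : R) (heps : 0 < eps) (x : {ffun 'I_n -> X}) :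
  Prob Pi x (fun z => Lloss Lam (Shat z) x z - D0m Lam m x z > eps)
  <= 2 * expR (- n%:R * (eps ^+ 2 / (2 * L_max Pi H Lam ^+ 2)
        - 2 * (hb (m%:R / n%:R) + m.+1%:R * ln (#|Sym Z Xh|%:R) / n%:R))).
Proof.
case: hPi => hPi0 hPi1.
have n0 : (0 < n)%N by lia.
have nR0 : 0 < n%:R :> R by rewrite ltr0n.
pose c := L_max Pi H Lam.
pose a := eps ^+ 2 / (2 * c ^+ 2).
pose A := [set S : {ffun 'I_n -> Sym Z Xh} | (switches S <= m)%N].
pose p (z : {ffun 'I_n -> Z}) := \prod_(t < n) Pi (x t) (z t).
have p0 : forall z, 0 <= p z by move=> z; apply: prodr_ge0 => t _.
pose Y (P : {ffun 'I_n -> Sym Z Xh} * {ffun 'I_n -> Sym Z Xh}) (t : 'I_n) (w : Z) : R :=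
  (Lam (x t) (P.1 t w) - ell Pi H Lam w (P.1 t)) - (Lam (x t) (P.2 t w) - ell Pi H Lam w (P.2 t)).
pose G P (z : {ffun 'I_n -> Z}) := n%:R * eps < \sum_t Y P t (z t).
have mean_ell : forall x0 s, \sum_w Pi x0 w * ell Pi H Lam w s = \sum_w Pi x0 w * Lam x0 (s w).
  move=> x0 s.
  have e1 : \sum_w Pi x0 w * ell Pi H Lam w s =
      \sum_x' (\sum_w Pi x0 w * H w x') * rho Pi Lam s x'.
    rewrite /ell; under eq_bigr do rewrite mulr_sumr.
    rewrite exchange_big /=; apply: eq_bigr => x' _; rewrite mulr_suml.
    by apply: eq_bigr => w _; rewrite mulrA.
  rewrite e1; under eq_bigr do rewrite hH.
  rewrite (bigD1 x0) //= eqxx mul1r big1 ?addr0; last first.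
    by move=> x' hx; rewrite eq_sym (negbTE hx) mul0r.
  by rewrite /rho; apply: eq_bigr => w _; rewrite mulrC.
have Ymean : forall P t, \sum_w Pi (x t) w * Y P t w = 0.
  move=> P t; rewrite /Y.
  under eq_bigr do rewrite !mulrBr.
  rewrite !sumrB !mean_ell; ring.
have c0 : 0 <= c by rewrite /c /L_max /Lam_max /ell_max addr_ge0 // bigmax_ge0.
have LM : forall a b, Lam a b <= Lam_max Lam.
  by move=> a0 b0; exact: (@bigmax_ge R _ (fun p : X * Xh => Lam p.1 p.2) (a0, b0)).
have EM : forall z1 s1 z2 s2, ell Pi H Lam z1 s1 - ell Pi H Lam z2 s2 <= ell_max Pi H Lam.
  move=> z1 s1 z2 s2.
  exact: (@bigmax_ge R _ (fun p : (Z * Sym Z Xh) * (Z * Sym Z Xh) =>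
     ell Pi H Lam p.1.1 p.1.2 - ell Pi H Lam p.2.1 p.2.2) ((z1, s1), (z2, s2))).
have Yrange : forall P t w, -c <= Y P t w <= c.
  move=> P t w.
  have := LM (x t) (P.1 t w); have := LM (x t) (P.2 t w).
  have := hLam (x t) (P.1 t w); have := hLam (x t) (P.2 t w).
  have := EM w (P.2 t) w (P.1 t); have := EM w (P.1 t) w (P.2 t).
  rewrite /Y /c /L_max => *; apply/andP; split; lra.
have sum1 : \sum_z p z = 1.
  exact: (@prod_prob R _ _ (fun t w => Pi (x t) w)).
have step2 : forall P, \sum_(z | G P z) p z <= expR (- (n%:R * a)).
  move=> P.
  have [c00 | cpos] : c = 0 \/ 0 < c.
    by move: c0; rewrite le_eqVlt => /orP[/eqP <-|->]; [left|right].
    rewrite /a c00 expr0n /= mulr0 invr0 mulr0 mulr0 oppr0 expR0 -sum1.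
    rewrite [X in _ <= X](bigID (G P)) /= lerDl.
    by apply: sumr_ge0 => z _.
  apply: (@le_trans _ _ (expR (- (eps / c ^+ 2 * (n%:R * eps)) +
      #|'I_n|%:R * ((eps / c ^+ 2 * c) ^+ 2 / 2)))).
    apply: (@chernoff_prod R 'I_n Z (fun t w => Pi (x t) w) (Y P)) => //.
    by rewrite divr_ge0 ?exprn_ge0 // ltW.
  rewrite card_ord le_eqVlt; apply/orP; left; apply/eqP; congr (expR _).
  by rewrite /a; field; rewrite gt_eqF.
have step1 : Prob Pi x (fun z => Lloss Lam (Shat z) x z - D0m Lam m x z > eps)
    <= \sum_(P in finset.setX A A) \sum_(z | G P z) p z.
  rewrite /Prob.
  apply: (@le_trans _ _ (\sum_z \sum_(P in finset.setX A A) (if G P z then p z else 0))).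
    rewrite [X in X <= _]big_mkcond /=; apply: ler_sum => z _.
    case: ifP => Ez; last first.
      by apply: sumr_ge0 => P _; case: ifP => _ //; exact: p0.
    case: (hShat z) => hs1 hmin.
    move: Ez; rewrite /D0m; case: pickP => [S0 hS0|hnone]; last first.
      by have := hnone (Shat z); rewrite hs1.
    have [S2 hS2 ->] := @bigmin_att R _ (fun S => (switches S <= m)%N)
      (fun S => Lloss Lam S x z) (Lloss Lam S0 x z) (ex_intro2 _ _ S0 hS0 erefl).
    move=> Ez.
    have hG : G (Shat z, S2) z.
      have e : \sum_t Y (Shat z, S2) t (z t) =
          n%:R * (Lloss Lam (Shat z) x z - Lloss Lam S2 x z) +
          n%:R * (Ltilde Pi H Lam S2 z - Ltilde Pi H Lam (Shat z) z).
        rewrite /Lloss /Ltilde -!mulrBr !mulVKf ?gt_eqF // -!sumrB -big_split /=.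
        by apply: eq_bigr => t _; rewrite /Y /=; ring.
      rewrite /G e.
      have h1 : n%:R * eps < n%:R * (Lloss Lam (Shat z) x z - Lloss Lam S2 x z).
        by rewrite ltr_pM2l.
      have h2 : 0 <= n%:R * (Ltilde Pi H Lam S2 z - Ltilde Pi H Lam (Shat z) z).
        by rewrite mulr_ge0 ?subr_ge0 ?hmin // ltW.
      lra.
    rewrite (bigD1 (Shat z, S2)) /=; last by rewrite !inE hs1 hS2.
    rewrite (ifT _ _ hG) lerDl; apply: sumr_ge0 => P _; case: ifP => _ //; exact: p0.
  rewrite exchange_big /=; apply: ler_sum => P _.
  by rewrite [X in _ <= X]big_mkcond.
have step3 : \sum_(P in finset.setX A A) \sum_(z | G P z) p z
    <= (#|A|%:R) ^+ 2 * expR (- (n%:R * a)).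
  apply: (@le_trans _ _ (\sum_(P in finset.setX A A) expR (- (n%:R * a)))).
    by apply: ler_sum => P _; exact: step2.
  by rewrite sumr_const cardsX -(mulr_natl (expR _)) natrM expr2.
pose B1 := [set f : {ffun 'I_n -> bool} | (#|[set t | f t]| <= m)%N].
have cntA : (#|A| <= #|B1| * #|Sym Z Xh| ^ m.+1)%N.
  exact: (@count_A (Sym Z Xh) n m (Ordinal n0)).
have hm2 : (m.*2 <= n)%N.
  have := odd_double_half n; move: hm; rewrite -leq_double => hm'; lia.
have bb := @binom_bound R n m n0 hm2.
have rhs0 : 0 <= 2 * expR (- n%:R * (eps ^+ 2 / (2 * L_max Pi H Lam ^+ 2)
        - 2 * (hb (m%:R / n%:R) + m.+1%:R * ln (#|Sym Z Xh|%:R) / n%:R))).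
  by rewrite mulr_ge0 // expR_ge0.
have [N0|Npos] := posnP #|Sym Z Xh|.
  move: cntA; rewrite N0 exp0n // muln0 leqn0 => /eqP A0.
  apply: le_trans step1 _; apply: le_trans step3 _.
  by rewrite A0 expr0n /= mul0r.
set N := #|Sym Z Xh| in cntA Npos *.
set K := n%:R * hb (m%:R / n%:R) + m.+1%:R * ln (N%:R : R).
have hA : (#|A|%:R : R) <= expR K.
  apply: (@le_trans _ _ ((#|B1| * N ^ m.+1)%N%:R)); first by rewrite ler_nat.
  rewrite natrM natrX /K expRD; apply: ler_pM => //.
  by rewrite expRM_natl lnK // posrE ltr0n.
apply: le_trans step1 _; apply: le_trans step3 _.
apply: (@le_trans _ _ (expR K ^+ 2 * expR (- (n%:R * a)))).
  apply: ler_wpM2r; first exact: expR_ge0.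
  by apply: lerXn2r; rewrite ?nnegrE ?ler0n ?expR_ge0.
have ee : expR K ^+ 2 * expR (- (n%:R * a)) =
  expR (- n%:R * (eps ^+ 2 / (2 * L_max Pi H Lam ^+ 2)
        - 2 * (hb (m%:R / n%:R) + m.+1%:R * ln (N%:R) / n%:R))).
  rewrite -expRM_natl -expRD; congr (expR _).
  have -> : eps ^+ 2 / (2 * L_max Pi H Lam ^+ 2) = a by [].
  by rewrite /K; field; rewrite gt_eqF.
rewrite ee; have := expR_ge0 (- n%:R * (eps ^+ 2 / (2 * L_max Pi H Lam ^+ 2)
        - 2 * (hb (m%:R / n%:R) + m.+1%:R * ln (N%:R) / n%:R))).
lra.
Qed.
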